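(* For any graph $G$: (i) $ct_{\gamma_{t2}}(G) = 1$ if and only if there exists a minimum semitotal dominating set $D$ of $G$ such that $D$ contains a friendly triple. (ii) $ct_{\gamma_{t2}}(G) = 2$ if and only if no minimum semitotal dominating set of $G$ contains a friendly triple and there exists a semitotal dominating set of $G$ of size $\gamma_{t2}(G) + 1$ that contains an ST-configuration.
   Context: All graphs are finite, simple and connected; $d_G(u,v)$ is the distance in $G$. A semitotal dominating set of $G$ is a set $D\subseteq V(G)$ such that every vertex of $V(G)\setminus D$ has a neighbour in $D$ and every vertex of $D$ is at distance at most two from some other vertex of $D$; $\gamma_{t2}(G)$ is the minimum size of such a set, and a minimum semitotal dominating set is one of this size. Contracting an edge $uv$ means deleting $u,v$ and adding a new vertex adjacent to every neighbour of $u$ or $v$; $ct_{\gamma_{t2}}(G)$ is the smallest $k$ such that contracting some $k$ edges of $G$ yields a graph $G'$ with $\gamma_{t2}(G')<\gamma_{t2}(G)$. A friendly triple is a set of three distinct vertices $x,y,z$ with $xy\in E(G)$ and $d_G(y,z)\leq 2$. A set $S$ contains an ST-configuration if $S$ contains distinct vertices forming one of the following (other edges among them may also be present): (O1) $a,b,c,d,e,f$ with $ab,bc,de,ef\in E(G)$; (O2) $a,b,c,d,e,f$ with $ab,de,ef\in E(G)$ and $d_G(b,c)=2$; (O3) $a,b,c,d,e,f$ with $ab,de\in E(G)$, $d_G(b,c)=2$ and $d_G(e,f)=2$, where $c$ and $f$ are allowed to be the same vertex (all other listed vertices distinct); (O4) $a,b,c,d$ with $ab,ac,ad\in E(G)$;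 (O5) $a,b,c,d$ with $ab,bc\in E(G)$ and $d_G(c,d)=2$; (O6) $a,b,c,d$ with $ab,bd\in E(G)$ and $d_G(b,c)=2$; (O7) $a,b,c,d$ with $ab,cd\in E(G)$ and $d_G(b,c)=2$. *)

(* Defs.v *)
(* A graph G on vertex set V : {set T} with adjacency e : rel T.
   The original graph has V = [set: T]; contracted graphs keep a subset of T. *)
From mathcomp Require Import all_boot.
Set Implicit Arguments. Unset Strict Implicit. Unset Printing Implicit Defensive.

Section Graphs.
Variable T : finType.

Record graph := Graph { gV : {set T}; gE : rel T }.

Definition adj (G : graph) (x y : T) : bool :=
  [&& x \in gV G, y \in gV G, x != y & gE G x y].

Definition dist_le2 (G : graph) (x y : T) : bool :=
  [&& x \in gV G, y \in gV G &
      [|| x == y, adj G x y | [exists z, adj G x z && adj G z y]]].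

Definition dist_eq2 (G : graph) (x y : T) : Prop :=
  x != y /\ ~~ adj G x y /\ exists z, adj G x z /\ adj G z y.

Definition semitotal_dom (G : graph) (D : {set T}) : bool :=
  [&& D \subset gV G,
      [forall x in gV G :\: D, exists y in D, adj G x y] &
      [forall x in D, exists y in D, (y != x) && dist_le2 G x y]].

(* gamma_t2(G): minimum size of a semitotal dominating set
   (the default #|T| is never used for the graphs considered, which always
   have a semitotal dominating set). *)
Definition gamma_t2 (G : graph) : nat :=
  \big[minn/#|T|]_(D : {set T} | semitotal_dom G D) #|D|.

Definition min_semitotal_dom (G : graph) (D : {set T}) : Prop :=
  semitotal_dom G D /\ #|D| = gamma_t2 G.

(* contraction of the edge uv: v is deleted and u plays the role of the
   new vertex, adjacent to every neighbour of u or v *)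
Definition contract (G : graph) (u v : T) : graph :=
  Graph (gV G :\ v)
        (fun x y => [|| adj G x y, (x == u) && adj G v y | (y == u) && adj G x v]).

Inductive contracts : nat -> graph -> graph -> Prop :=
| contracts0 G : contracts 0 G G
| contractsS k G u v G' : adj G u v -> contracts k (contract G u v) G' ->
    contracts k.+1 G G'.

Definition reducible_by (G : graph) (k : nat) : Prop :=
  exists G', contracts k G G' /\
    exists D, semitotal_dom G' D /\ #|D| < gamma_t2 G.

Definition ct_is (G : graph) (k : nat) : Prop :=
  reducible_by G k /\ forall j, j < k -> ~ reducible_by G j.

Definition friendly_triple (G : graph) (x y z : T) : Prop :=
  [/\ uniq [:: x; y; z], adj G x y & dist_le2 G y z].

Definition has_friendly_triple (G : graph) (D : {set T}) : Prop :=
  exists x y z, [/\ x \in D, y \in D, z \in D & friendly_triple G x y z].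

Definition has_ST_configuration (G : graph) (S : {set T}) : Prop :=
  (exists a b c d e f, [/\ uniq [:: a; b; c; d; e; f],
     all (mem S) [:: a; b; c; d; e; f] &
     [/\ adj G a b, adj G b c, adj G d e & adj G e f]]) \/
  (exists a b c d e f, [/\ uniq [:: a; b; c; d; e; f],
     all (mem S) [:: a; b; c; d; e; f] &
     [/\ adj G a b, adj G d e, adj G e f & dist_eq2 G b c]]) \/
  (* O3 (c = f allowed) *)
  (exists a b c d e f, [/\ uniq [:: a; b; c; d; e], uniq [:: a; b; d; e; f],
     all (mem S) [:: a; b; c; d; e; f] &
     [/\ adj G a b, adj G d e, dist_eq2 G b c & dist_eq2 G e f]]) \/
  (exists a b c d, [/\ uniq [:: a; b; c; d], all (mem S) [:: a; b; c; d] &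
     [/\ adj G a b, adj G a c & adj G a d]]) \/
  (exists a b c d, [/\ uniq [:: a; b; c; d], all (mem S) [:: a; b; c; d] &
     [/\ adj G a b, adj G b c & dist_eq2 G c d]]) \/
  (exists a b c d, [/\ uniq [:: a; b; c; d], all (mem S) [:: a; b; c; d] &
     [/\ adj G a b, adj G b d & dist_eq2 G b c]]) \/
  (exists a b c d, [/\ uniq [:: a; b; c; d], all (mem S) [:: a; b; c; d] &
     [/\ adj G a b, adj G c d & dist_eq2 G b c]]).

End Graphs.

(* Main.v *)
Require Import Defs.
From mathcomp Require Import all_boot.
Set Implicit Arguments. Unset Strict Implicit. Unset Printing Implicit Defensive.

Ltac split_hyps := repeat match goal with H : is_true (_ && _) |- _ => case/andP: H => ? ? end.
Ltac neq := solve [done | by rewrite eq_sym].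
Ltac uq := rewrite /= !inE !negb_or; repeat (apply/andP; split); try neq.

Section Proofs.
Variable T : finType.
Implicit Types (G : graph T) (D : {set T}).

Definition gsym G := forall x y : T, adj G x y = adj G y x.

Lemma adjP G x y : adj G x y -> [/\ x \in gV G, y \in gV G & x != y].
Proof. by case/and4P. Qed.

Lemma dl2P G x y : dist_le2 G x y ->
  [/\ x \in gV G, y \in gV G & [\/ x = y, adj G x y | exists m, adj G x m /\ adj G m y]].
Proof.
case/and3P=> hx hy /or3P [/eqP e|h|/existsP[m /andP[h1 h2]]].
- by split => //; apply: Or31.
- by split => //; apply: Or32.
- by split => //; apply: Or33; exists m.
Qed.

Lemma dl2_refl G x : x \in gV G -> dist_le2 G x x.
Proof. by move=> h; rewrite /dist_le2 h eqxx. Qed.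

Lemma adj_dl2 G x y : adj G x y -> dist_le2 G x y.
Proof. move=> h; case/adjP: (h) => hx hy _; by rewrite /dist_le2 hx hy h orbT. Qed.

Lemma dl2_mid G x m y : adj G x m -> adj G m y -> dist_le2 G x y.
Proof.
move=> h1 h2; case/adjP: (h1) => hx _ _; case/adjP: (h2) => _ hy _.
rewrite /dist_le2 hx hy; apply/or3P; apply: Or33; apply/existsP; exists m; by rewrite h1 h2.
Qed.

Lemma dl2_sym G : gsym G -> forall x y, dist_le2 G x y -> dist_le2 G y x.
Proof.
move=> hs x y /dl2P [hx hy [->|h|[m [h1 h2]]]].
- exact: dl2_refl.
- by apply: adj_dl2; rewrite hs.
- by apply: (@dl2_mid _ _ m); rewrite hs.
Qed.

Lemma dl2_split G b c : b != c -> dist_le2 G b c -> adj G b c \/ dist_eq2 G b c.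
Proof.
move=> nbc /dl2P [_ _ [e|h|[m [h1 h2]]]]; first by rewrite e eqxx in nbc.
- by left.
- case hbc: (adj G b c); [by left | right; split => //; split; [by rewrite hbc | by exists m]].
Qed.

Lemma eq2_dl2 G b c : dist_eq2 G b c -> dist_le2 G b c.
Proof. case=> _ [_ [m [h1 h2]]]; exact: dl2_mid h1 h2. Qed.

Lemma adjC_dec G u v x y : adj (contract G u v) x y ->
  [/\ x != v, y != v, x \in gV G, y \in gV G &
     [\/ adj G x y, x = u /\ adj G v y | y = u /\ adj G x v]].
Proof.
case/and4P; rewrite /= !inE => /andP[hxv hx] /andP[hyv hy] _ /or3P[h|/andP[/eqP ex h]|/andP[/eqP ey h]]; split => //.
- by apply: Or31.
- by apply: Or32.
- by apply: Or33.
Qed.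

Lemma adjC_intro G u v x y : x \in gV G -> y \in gV G -> x != v -> y != v -> x != y ->
  [\/ adj G x y, x = u /\ adj G v y | y = u /\ adj G x v] -> adj (contract G u v) x y.
Proof.
move=> hx hy hxv hyv hxy H; apply/and4P; split; rewrite /= ?inE ?hx ?hy ?hxv ?hyv //.
by case: H => [->|[-> ->]|[-> ->]]; rewrite ?eqxx ?orbT.
Qed.

Lemma contract_sym G u v : gsym G -> gsym (contract G u v).
Proof.
have H: forall x y, gsym G -> adj (contract G u v) x y -> adj (contract G u v) y x.
  move=> x y hs hA; case/and4P: (hA) => _ _ nxy _.
  case/adjC_dec: hA => [h1 h2 h3 h4 H]; apply: adjC_intro => //; first by rewrite eq_sym.
  case: H => [h|[-> h]|[-> h]].
  - by apply: Or31; rewrite hs.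
  - by apply: Or33; split => //; rewrite hs.
  - by apply: Or32; split => //; rewrite hs.
by move=> hs x y; apply/idP/idP; apply: H.
Qed.

Lemma adjC_mono G u v x y : x != v -> y != v -> adj G x y -> adj (contract G u v) x y.
Proof. move=> hxv hyv h; case/adjP: (h) => hx hy hxy; apply: adjC_intro => //; exact: Or31. Qed.

Lemma adjC_toU G u v x : adj G u v -> x != u -> adj G x v -> adj (contract G u v) x u.
Proof.
move=> huv hxu hxv; case/adjP: (huv) => hu _ huv'; case/adjP: (hxv) => hx _ hxv'.
apply: adjC_intro => //. by apply: Or33.
Qed.

Lemma adjC_fromU G u v x : adj G u v -> x != u -> adj G v x -> adj (contract G u v) u x.
Proof.
move=> huv hxu hvx; case/adjP: (huv) => hu _ huv'; case/adjP: (hvx) => _ hx hvx'.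
apply: adjC_intro => //; try (by rewrite eq_sym); apply: Or32; by split.
Qed.

Lemma dl2C_mono G u v s t : adj G u v -> s != v -> t != v -> dist_le2 G s t ->
  dist_le2 (contract G u v) s t.
Proof.
move=> huv hsv htv /dl2P [hs ht [->|h|[m [h1 h2]]]].
- apply: dl2_refl; by rewrite /= !inE htv ht.
- apply: adj_dl2; exact: adjC_mono.
- have [mv|mv] := eqVneq m v.
  + subst m. have [st|st] := eqVneq s t.
    { subst t; apply: dl2_refl; by rewrite /= !inE hsv hs. }
    have [su|su] := eqVneq s u.
    * subst s. apply: adj_dl2; apply: adjC_fromU => //; by rewrite eq_sym.
    * have [tu|tu] := eqVneq t u.
      -- subst t. apply: adj_dl2; by apply: adjC_toU.
      -- apply: (@dl2_mid _ _ u); [exact: adjC_toU | exact: adjC_fromU].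
  + apply: (@dl2_mid _ _ m); exact: adjC_mono.
Qed.

Lemma dl2C_toU G u v s : adj G u v -> s != v -> s != u -> dist_le2 G s v ->
  dist_le2 (contract G u v) s u.
Proof.
move=> huv hsv hsu /dl2P [hs hv [e|h|[m [h1 h2]]]].
- by rewrite e eqxx in hsv.
- apply: adj_dl2; exact: adjC_toU.
- have [mu|mu] := eqVneq m u.
  + subst m; apply: adj_dl2; apply: adjC_mono => //. by case/adjP: huv => _ _ h.
  + have mv : m != v by case/adjP: h2.
    apply: (@dl2_mid _ _ m); [exact: adjC_mono | exact: adjC_toU].
Qed.

Lemma dl2C_dec G u v q r : gsym G -> dist_le2 (contract G u v) q r ->
  [\/ dist_le2 G q r, q = u /\ dist_le2 G v r, r = u /\ dist_le2 G q v |
      (adj G q v \/ adj G q u) /\ (adj G r v \/ adj G r u)].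
Proof.
move=> hs /dl2P [hq hr H]. move: hq hr; rewrite /= !inE => /andP[hqv hq] /andP[hrv hr].
case: H => [<-|h|[m [h1 h2]]].
- apply: Or41; exact: dl2_refl.
- case/adjC_dec: h => _ _ _ _ [h|[-> h]|[-> h]].
  + apply: Or41; exact: adj_dl2.
  + apply: Or42; split=> //; exact: adj_dl2.
  + apply: Or43; split=> //; exact: adj_dl2.
- case/adjC_dec: h1 => _ _ _ _ [a1|[eq1 a1]|[eq1 a1]];
  case/adjC_dec: h2 => _ _ _ _ [b1|[eq2 b1]|[eq2 b1]].
  + apply: Or41; exact: dl2_mid a1 b1.
  + subst m; apply: Or44; split; [by right | by left; rewrite hs].
  + apply: Or43; split => //; exact: dl2_mid a1 b1.
  + apply: Or42; split => //; exact: dl2_mid a1 b1.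
  + apply: Or42; split => //; exact: adj_dl2.
  + subst q r; apply: Or41; exact: dl2_refl.
  + subst m; apply: Or44; split; [by left | by right; rewrite hs].
  + apply: Or44; split; [by left | by left; rewrite hs].
  + apply: Or43; split => //; exact: adj_dl2.
Qed.

Lemma stdP G D : semitotal_dom G D ->
  [/\ D \subset gV G,
      forall x, x \in gV G -> x \notin D -> exists2 y, y \in D & adj G x y &
      forall x, x \in D -> exists2 y, y \in D & (y != x) /\ dist_le2 G x y].
Proof.
case/and3P => hsub /forall_inP hd /forall_inP ht; split => //.
- move=> x hx hxD; have hx' : x \in gV G :\: D by rewrite inE hxD hx.
  have /exists_inP [y hy hxy] := hd x hx'. by exists y.
- move=> x hx; have /exists_inP [y hy /andP[h1 h2]] := ht x hx; by exists y.
Qed.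

Lemma stdI G D : D \subset gV G ->
  (forall x, x \in gV G -> x \notin D -> exists2 y, y \in D & adj G x y) ->
  (forall x, x \in D -> exists2 y, y \in D & (y != x) /\ dist_le2 G x y) ->
  semitotal_dom G D.
Proof.
move=> hsub hd ht; apply/and3P; split => //.
- apply/forall_inP => x; rewrite inE => /andP[hxD hx]; have [y hy h] := hd x hx hxD.
  apply/exists_inP; by exists y.
- apply/forall_inP => x hx; have [y hy [h1 h2]] := ht x hx; apply/exists_inP; exists y => //.
  by rewrite h1 h2.
Qed.

Lemma fr_intro G x y z : x != y -> x != z -> y != z -> adj G x y -> dist_le2 G y z ->
  friendly_triple G x y z.
Proof. move=> h1 h2 h3 h4 h5; split => //; by rewrite /= !inE !negb_or h1 h2 h3. Qed.

Lemma fr_elim G x y z : friendly_triple G x y z ->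
  [/\ x != y, x != z, y != z, adj G x y & dist_le2 G y z].
Proof. case; rewrite /= !inE !negb_or => U h4 h5; split_hyps; by split. Qed.

Lemma contract_fr G D x y z : gsym G -> semitotal_dom G D -> x \in D -> y \in D -> z \in D ->
  friendly_triple G x y z -> semitotal_dom (contract G y x) (D :\ x).
Proof.
move=> hs /stdP [hsub hd ht] hx hy hz /fr_elim [nxy nxz nyz hxy hyz].
have hyx : adj G y x by rewrite hs.
apply: stdI.
- by rewrite /= setSD.
- move=> w; rewrite /= !inE => /andP[hwx hw] hwD.
  have hwD' : w \notin D by move: hwD; rewrite hwx.
  have [t ht1 ht2] := hd w hw hwD'.
  have [tx|tx] := eqVneq t x.
  + subst t; exists y; first by rewrite !inE hy eq_sym nxy.
    apply: adjC_toU => //; apply/eqP => e; by rewrite e hy in hwD'.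
  + exists t; first by rewrite !inE ht1 tx.
    exact: adjC_mono.
- move=> s; rewrite !inE => /andP[hsx hsD].
  have [sy|sy] := eqVneq s y.
  + subst s; exists z; first by rewrite !inE hz eq_sym nxz.
    split; first by rewrite eq_sym.
    apply: dl2C_mono => //; by rewrite eq_sym.
  + have [t ht1 [ht2 ht3]] := ht s hsD.
    have [tx|tx] := eqVneq t x.
    * subst t; exists y; first by rewrite !inE hy eq_sym nxy.
      split; first by rewrite eq_sym.
      exact: dl2C_toU.
    * exists t; first by rewrite !inE ht1 tx.
      split => //; exact: dl2C_mono.
Qed.

Lemma vnotin G u v D : semitotal_dom (contract G u v) D -> v \notin D.
Proof.
case/stdP => hsub _ _; apply/negP => /(subsetP hsub); by rewrite /= !inE eqxx.
Qed.

Lemma subV G u v D : semitotal_dom (contract G u v) D -> D \subset gV G.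
Proof.
case/stdP => hsub _ _; apply/subsetP => w /(subsetP hsub); by rewrite /= !inE => /andP[].
Qed.

Lemma liftA G u v D : gsym G -> adj G u v -> semitotal_dom (contract G u v) D -> u \in D ->
  semitotal_dom G (v |: D).
Proof.
move=> hs huv hstd hu; have vD := vnotin hstd; have hsubV := subV hstd.
case/stdP: hstd => hsub hd ht.
have hvu : adj G v u by rewrite hs.
case/adjP: (huv) => huV hvV nuv.
apply: stdI.
- apply/subsetP => w; rewrite !inE => /orP[/eqP->//|/(subsetP hsubV)] //.
- move=> w hw; rewrite !inE negb_or => /andP[hwv hwD].
  have hw' : w \in gV (contract G u v) by rewrite /= !inE hwv hw.
  have [t htD /adjC_dec [_ _ _ _ [h|[ewu _]|[etu h]]]] := hd w hw' hwD.
  + exists t => //; by rewrite !inE htD orbT.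
  + by rewrite ewu hu in hwD.
  + exists v => //; by rewrite !inE eqxx.
- move=> s; rewrite !inE => /orP[/eqP->|hsD].
  + exists u; first by rewrite !inE hu orbT.
    split; [by [] | exact: adj_dl2].
  + have [su|su] := eqVneq s u.
    * subst s; exists v; [by rewrite !inE eqxx | split; [by rewrite eq_sym | exact: adj_dl2]].
    * have [t htD [nts /(dl2C_dec hs) [h|[e _]|[e h]|[h1 h2]]]] := ht s hsD.
      -- exists t; [by rewrite !inE htD orbT | by []].
      -- by rewrite e eqxx in su.
      -- exists v; first by rewrite !inE eqxx.
         split => //; apply/eqP => e'; move: hsD; by rewrite -e' (negbTE vD).
      -- have hsv : s != v by apply/eqP => e'; move: hsD; by rewrite e' (negbTE vD).
         case: h1 => h1.
         ++ exists v; [by rewrite !inE eqxx | split; [by rewrite eq_sym | exact: adj_dl2]].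
         ++ exists u; [by rewrite !inE hu orbT | split; [by rewrite eq_sym | exact: adj_dl2]].
Qed.

Lemma nearA G u v a s : gsym G -> adj G u v -> (a = u \/ a = v) ->
  (adj G s v \/ adj G s u) -> dist_le2 G s a.
Proof.
move=> hs huv [->|->] [h|h]; try exact: adj_dl2.
- apply: (@dl2_mid _ _ v) => //; by rewrite hs.
- exact: (@dl2_mid _ _ u).
Qed.

Lemma liftB G u v D a y0 : gsym G -> adj G u v -> semitotal_dom (contract G u v) D ->
  u \notin D -> (a = u \/ a = v) -> y0 \in D -> adj G y0 a -> semitotal_dom G (a |: D).
Proof.
move=> hs huv hstd uD ha hy0 hya; have vD := vnotin hstd; have hsubV := subV hstd.
case/stdP: hstd => hsub hd ht.
have aD : a \notin D by case: ha => ->.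
case/adjP: (huv) => huV hvV nuv.
case/adjP: (hya) => _ haV _.
apply: stdI.
- apply/subsetP => w; rewrite !inE => /orP[/eqP->//|/(subsetP hsubV)] //.
- move=> w hw; rewrite !inE negb_or => /andP[hwa hwD].
  have [wu|wu] := eqVneq w u.
  { subst w; exists a; first by rewrite !inE eqxx.
    case: ha => e; [by rewrite e eqxx in hwa | by rewrite e]. }
  have [wv|wv] := eqVneq w v.
  { subst w; exists a; first by rewrite !inE eqxx.
    case: ha => e; [by rewrite e hs | by rewrite e eqxx in hwa]. }
  have hw' : w \in gV (contract G u v) by rewrite /= !inE wv hw.
  have [t htD /adjC_dec [_ _ _ _ [h|[ewu _]|[etu h]]]] := hd w hw' hwD.
  + exists t => //; by rewrite !inE htD orbT.
  + by rewrite ewu eqxx in wu.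
  + by rewrite -etu htD in uD.
- move=> s; rewrite !inE => /orP[/eqP->|hsD].
  + exists y0; first by rewrite !inE hy0 orbT.
    split; [apply/eqP => e; by rewrite -e hy0 in aD | by apply: adj_dl2; rewrite hs].
  + have [t htD [nts /(dl2C_dec hs) [h|[e _]|[e h]|[h1 h2]]]] := ht s hsD.
    * exists t; [by rewrite !inE htD orbT | by []].
    * by rewrite -e hsD in uD.
    * by rewrite -e htD in uD.
    * exists a; first by rewrite !inE eqxx.
      split; [apply/eqP => e; by rewrite e hsD in aD | exact: nearA h1].
Qed.

Lemma domU G u v D : gsym G -> adj G u v -> semitotal_dom (contract G u v) D -> u \notin D ->
  exists a y0, [/\ a = u \/ a = v, y0 \in D & adj G y0 a].
Proof.
move=> hs huv /stdP [_ hd _] uD.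
case/adjP: (huv) => huV _ nuv.
have hu' : u \in gV (contract G u v) by rewrite /= !inE nuv huV.
have [t htD /adjC_dec [_ _ _ _ [h|[_ h]|[e _]]]] := hd u hu' uD.
- exists u, t; split => //; [by left | by rewrite hs].
- exists v, t; split => //; [by right | by rewrite hs].
- by rewrite -e htD in uD.
Qed.

Lemma partnerA G u v D : gsym G -> adj G u v -> semitotal_dom (contract G u v) D -> u \in D ->
  exists2 s, s \in D & (s != u) /\ (dist_le2 G u s \/ dist_le2 G v s).
Proof.
move=> hs huv /stdP [_ _ ht] hu.
have [s hsD [nsu H]] := ht u hu; exists s => //; split => //.
case/(dl2C_dec hs): H => [h|[_ h]|[e _]|[_ [h|h]]].
- by left.
- by right.
- by rewrite e eqxx in nsu.
- right; apply: adj_dl2; by rewrite hs.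
- left; apply: adj_dl2; by rewrite hs.
Qed.

Lemma partnerB G u v D a y0 : gsym G -> adj G u v -> semitotal_dom (contract G u v) D ->
  u \notin D -> (a = u \/ a = v) -> y0 \in D ->
  exists2 s, s \in D & (s != y0) /\ (dist_le2 G y0 s \/ dist_le2 G a s).
Proof.
move=> hs huv hstd uD ha hy0; case/stdP: hstd => _ _ ht.
have [s hsD [nsy H]] := ht y0 hy0; exists s => //; split => //.
case/(dl2C_dec hs): H => [h|[e _]|[e _]|[_ h]].
- by left.
- by rewrite -e hy0 in uD.
- by rewrite -e hsD in uD.
- right; apply: (dl2_sym hs); exact: nearA h.
Qed.

Lemma lift G u v D : gsym G -> adj G u v -> semitotal_dom (contract G u v) D ->
  exists D0, [/\ semitotal_dom G D0, #|D0| = #|D|.+1 & has_friendly_triple G D0].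
Proof.
move=> hs huv hstd; have vD := vnotin hstd.
case/adjP: (huv) => _ _ nuv.
have [uD|uD] := boolP (u \in D).
- exists (v |: D); split; first exact: (liftA hs huv hstd uD).
  + by rewrite cardsU1 vD.
  + have [s hsD [nsu H]] := partnerA hs huv hstd uD.
    have nsv : s != v by apply/eqP => e; by rewrite -e hsD in vD.
    case: H => H.
    * exists v, u, s; split; rewrite ?inE ?eqxx ?hsD ?uD ?orbT //.
      apply: fr_intro; try neq; by rewrite hs.
    * exists u, v, s; split; rewrite ?inE ?eqxx ?hsD ?uD ?orbT //.
      apply: fr_intro; try neq.
- have [a [y0 [ha hy0 hya]]] := domU hs huv hstd uD.
  have aD : a \notin D by case: ha => ->.
  exists (a |: D); split; first exact: (liftB hs huv hstd uD ha hy0 hya).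
  + by rewrite cardsU1 aD.
  + have [s hsD [nsy H]] := partnerB hs huv hstd uD ha hy0.
    have nay : a != y0 by apply/eqP => e; by rewrite e hy0 in aD.
    have nas : a != s by apply/eqP => e; by rewrite e hsD in aD.
    case: H => H.
    * exists a, y0, s; split; rewrite ?inE ?eqxx ?hsD ?hy0 ?orbT //.
      apply: fr_intro; try neq; by rewrite hs.
    * exists y0, a, s; split; rewrite ?inE ?eqxx ?hsD ?hy0 ?orbT //.
      apply: fr_intro; try neq.
Qed.

Definition Scond G D := exists x y z p q r,
  [/\ [&& x \in D, y \in D, z \in D, p \in D, q \in D & r \in D],
      friendly_triple G x y z, friendly_triple G p q r & [&& x != p, x != q & x != r]].

Lemma sc_intro G D x y z p q r : x \in D -> y \in D -> z \in D -> p \in D -> q \in D -> r \in D ->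
  friendly_triple G x y z -> friendly_triple G p q r -> x != p -> x != q -> x != r -> Scond G D.
Proof.
move=> hx hy hz hp hq hr F1 F2 xp xq xr; exists x, y, z, p, q, r; split => //.
- by rewrite hx hy hz hp hq hr.
- by rewrite xp xq xr.
Qed.

Lemma S_fork G D a b c d : gsym G -> a \in D -> b \in D -> c \in D -> d \in D ->
  a != b -> a != c -> a != d -> b != c -> b != d -> c != d ->
  adj G a b -> adj G b c -> dist_le2 G b d -> Scond G D.
Proof.
move=> hs ha hb hc hd ab ac ad bc bd cd h1 h2 h3.
apply: (@sc_intro _ _ a b c c b d) => //.
- apply: fr_intro => //; exact: adj_dl2.
- apply: fr_intro; try neq; by rewrite hs.
Qed.

Lemma S_end G D a b c d : gsym G -> a \in D -> b \in D -> c \in D -> d \in D ->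
  a != b -> a != c -> a != d -> b != c -> b != d -> c != d ->
  adj G a b -> adj G b c -> dist_le2 G c d -> Scond G D.
Proof.
move=> hs ha hb hc hd ab ac ad bc bd cd h1 h2 h3.
apply: (@sc_intro _ _ a b c b c d) => //.
- apply: fr_intro => //; exact: adj_dl2.
- exact: fr_intro.
Qed.

Lemma S_link G D a b c d : gsym G -> a \in D -> b \in D -> c \in D -> d \in D ->
  a != b -> a != c -> a != d -> b != c -> b != d -> c != d ->
  adj G a b -> adj G c d -> dist_le2 G b c -> Scond G D.
Proof.
move=> hs ha hb hc hd ab ac ad bc bd cd h1 h2 h3.
apply: (@sc_intro _ _ a b c d c b) => //.
- exact: fr_intro.
- apply: fr_intro; try neq; [by rewrite hs | exact: dl2_sym].
Qed.

Ltac fin hs := solve [done | by rewrite eq_sym | by rewrite hs | by apply: (dl2_sym hs)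
  | by apply: adj_dl2 | by apply: adj_dl2; rewrite hs | by apply: eq2_dl2
  | by apply: (dl2_sym hs); apply: eq2_dl2].

Lemma scC G D x y z p q r : gsym G ->
  x \in D -> y \in D -> z \in D -> p \in D -> q \in D -> r \in D ->
  adj G x y -> z != x -> z != y -> (dist_le2 G y z \/ dist_le2 G x z) ->
  p != x -> q != x -> r != x ->
  friendly_triple (contract G y x) p q r -> Scond G D.
Proof.
move=> hs hx hy hz hp hq hr hxy zx zy Hz px qx rx /fr_elim [pq pr qr hpq hqr].
have xy : x != y by case/adjP: hxy.
have hyx : adj G y x by rewrite hs.
case/adjC_dec: hpq => _ _ _ _ [a1|[ep a1]|[eqq a1]];
case/(dl2C_dec hs): hqr => [d1|[eq2 d1]|[er d1]|[d1 d2]].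
- have [yp|yp] := eqVneq y p.
  { subst p; apply: (@S_end _ D x y q r hs); fin hs. }
  have [yq|yq] := eqVneq y q.
  { subst q; apply: (@S_fork _ D x y p r hs); fin hs. }
  have [yr|yr] := eqVneq y r.
  { subst r; apply: (@S_link _ D p q y x hs); fin hs. }
  case: Hz => Hz.
  + apply: (@sc_intro _ D x y z p q r); try fin hs; apply: fr_intro; fin hs.
  + apply: (@sc_intro _ D y x z p q r); try fin hs; apply: fr_intro; fin hs.
- subst q; apply: (@S_end _ D p y x r hs); fin hs.
- subst r; apply: (@S_link _ D p q x y hs); fin hs.
- case: d1 => d1.
  + have [qy|qy] := eqVneq q y.
    * subst q; case: d2 => d2.
      -- apply: (@S_end _ D p y x r hs); fin hs.
      -- apply: (@S_fork _ D x y p r hs); fin hs.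
    * have [py|py] := eqVneq p y.
      -- subst p; case: d2 => d2.
         ++ apply: (@S_fork _ D y x q r hs); fin hs.
         ++ apply: (@S_fork _ D x y q r hs); fin hs.
      -- apply: (@S_end _ D p q x y hs); fin hs.
  + have qy : q != y by case/adjP: d1.
    have [py|py] := eqVneq p y.
    * subst p; case: d2 => d2.
      -- apply: (@S_end _ D q y x r hs); fin hs.
      -- apply: (@S_fork _ D x y q r hs); fin hs.
    * apply: (@S_end _ D p q y x hs); fin hs.
- subst p; apply: (@S_end _ D y x q r hs); fin hs.
- by rewrite ep eq2 eqxx in pq.
- by rewrite ep er eqxx in pr.
- subst p; case: d2 => d2.
  + apply: (@S_fork _ D y x q r hs); fin hs.
  + apply: (@S_end _ D q x y r hs); fin hs.
- subst q; apply: (@S_end _ D p x y r hs); fin hs.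
- subst q; apply: (@S_fork _ D p x y r hs); fin hs.
- by rewrite eqq er eqxx in qr.
- subst q; case: d2 => d2.
  + apply: (@S_fork _ D p x y r hs); fin hs.
  + apply: (@S_end _ D p x y r hs); fin hs.
Qed.

Lemma scT G D x y z a c w : gsym G -> x \in D -> y \in D -> z \in D -> a \in D -> c \in D ->
  w \in D -> friendly_triple G x y z -> a != x -> a != y -> a != z -> adj G a c ->
  w != a -> w != c -> (dist_le2 G c w \/ dist_le2 G a w) -> Scond G D.
Proof.
move=> hs hx hy hz ha hc hw F ax ay az hac wa wc Hw.
case/fr_elim: (F) => xy xz yz hxy hyz.
have ac : a != c by case/adjP: hac.
have [xc|xc] := eqVneq x c.
- subst c; apply: (@S_end _ D a x y z hs); fin hs.
- have [xw|xw] := eqVneq x w.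
  + subst w; have [cy|cy] := eqVneq c y.
    * subst c; apply: (@S_fork _ D a y x z hs); fin hs.
    * case: Hw => Hw.
      -- apply: (@S_link _ D a c x y hs); fin hs.
      -- apply: (@S_link _ D c a x y hs); fin hs.
  + case: Hw => Hw.
    * apply: (@sc_intro _ D x y z a c w); try fin hs; apply: fr_intro; fin hs.
    * apply: (@sc_intro _ D x y z c a w); try fin hs; apply: fr_intro; fin hs.
Qed.

Lemma cfg_P4 G D a b c d : gsym G -> a \in D -> b \in D -> c \in D -> d \in D ->
  a != b -> a != c -> a != d -> b != c -> b != d -> c != d ->
  adj G a b -> adj G b c -> adj G c d -> has_ST_configuration G D.
Proof.
move=> hs ha hb hc hd ab ac ad bc bd cd h1 h2 h3; rewrite /has_ST_configuration.
case hac: (adj G a c).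
- do 3 right; left; exists c, b, d, a; split; [uq | by rewrite /= ha hb hc hd | split; fin hs].
- do 5 right; left; exists d, c, a, b; split; [uq | by rewrite /= ha hb hc hd | split; try fin hs].
  split; first by rewrite eq_sym.
  split; first by rewrite hs hac.
  by exists b; split; rewrite hs.
Qed.

Lemma cfg_fork G D a b c d : gsym G -> a \in D -> b \in D -> c \in D -> d \in D ->
  a != b -> a != c -> a != d -> b != c -> b != d -> c != d ->
  adj G a b -> adj G b c -> dist_le2 G b d -> has_ST_configuration G D.
Proof.
move=> hs ha hb hc hd ab ac ad bc bd cd h1 h2 h3; rewrite /has_ST_configuration.
case: (dl2_split bd h3) => h.
- do 3 right; left; exists b, a, c, d; split; [uq | by rewrite /= ha hb hc hd | split; fin hs].
- do 5 right; left; exists a, b, d, c; split; [uq | by rewrite /= ha hb hc hd | split; fin hs].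
Qed.

Lemma cfg_end G D a b c d : gsym G -> a \in D -> b \in D -> c \in D -> d \in D ->
  a != b -> a != c -> a != d -> b != c -> b != d -> c != d ->
  adj G a b -> adj G b c -> dist_le2 G c d -> has_ST_configuration G D.
Proof.
move=> hs ha hb hc hd ab ac ad bc bd cd h1 h2 h3.
case: (dl2_split cd h3) => h; first exact: (@cfg_P4 _ D a b c d).
rewrite /has_ST_configuration.
do 4 right; left; exists a, b, c, d; split; [uq | by rewrite /= ha hb hc hd | split; fin hs].
Qed.

Lemma cfg_link G D a b c d : gsym G -> a \in D -> b \in D -> c \in D -> d \in D ->
  a != b -> a != c -> a != d -> b != c -> b != d -> c != d ->
  adj G a b -> adj G c d -> dist_le2 G b c -> has_ST_configuration G D.
Proof.
move=> hs ha hb hc hd ab ac ad bc bd cd h1 h2 h3.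
case: (dl2_split bc h3) => h; first exact: (@cfg_P4 _ D a b c d).
rewrite /has_ST_configuration.
do 6 right; exists a, b, c, d; split; [uq | by rewrite /= ha hb hc hd | split; fin hs].
Qed.

Lemma scS G D : gsym G -> Scond G D -> has_ST_configuration G D.
Proof.
move=> hs [x [y [z [p [q [r [H F1 F2 /and3P [xp xq xr]]]]]]]].
case/andP: H => hx /and5P [hy hz hp hq hr].
case/fr_elim: F1 => xy xz yz hxy hyz.
case/fr_elim: F2 => pq pr qr hpq hqr.
have [yp|yp] := eqVneq y p.
{ subst p; have [zq|zq] := eqVneq z q.
  - subst q; apply: (@cfg_end _ D x y z r hs); fin hs.
  - apply: (@cfg_fork _ D x y q z hs); fin hs. }
have [yq|yq] := eqVneq y q.
{ subst q; have [zp|zp] := eqVneq z p.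
  - subst p; apply: (@cfg_fork _ D x y z r hs); fin hs.
  - apply: (@cfg_fork _ D x y p z hs); fin hs. }
have [yr|yr] := eqVneq y r.
{ subst r; apply: (@cfg_link _ D p q y x hs); fin hs. }
have [zp|zp] := eqVneq z p.
{ subst p; apply: (@cfg_link _ D x y z q hs); fin hs. }
have [zq|zq] := eqVneq z q.
{ subst q; apply: (@cfg_link _ D x y z p hs); fin hs. }
have [zr|zr] := eqVneq z r.
{ subst r. case: (dl2_split yz hyz) => h1.
  - apply: (@cfg_end _ D x y z q hs); fin hs.
  - case: (dl2_split qr hqr) => h2.
    + apply: (@cfg_end _ D p q z y hs); fin hs.
    + rewrite /has_ST_configuration; do 2 right; left.
      exists x, y, z, p, q, z; split; [uq | uq | by rewrite /= hx hy hz hp hq | by split]. }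
case: (dl2_split yz hyz) => h1; case: (dl2_split qr hqr) => h2; rewrite /has_ST_configuration.
- left; exists x, y, z, p, q, r; split; [uq | | by split].
  by rewrite /= hx hy hz hp hq hr.
- right; left; exists p, q, r, x, y, z; split; [uq | | by split].
  by rewrite /= hx hy hz hp hq hr.
- right; left; exists x, y, z, p, q, r; split; [uq | | by split].
  by rewrite /= hx hy hz hp hq hr.
- do 2 right; left; exists x, y, z, p, q, r; split; [uq | uq | | by split].
  by rewrite /= hx hy hz hp hq hr.
Qed.

Lemma scR G D : gsym G -> has_ST_configuration G D -> Scond G D.
Proof.
move=> hs.
case=> [[a [b [c [d [e [f [U A [h1 h2 h3 h4]]]]]]]]|
       [[a [b [c [d [e [f [U A [h1 h2 h3 h4]]]]]]]]|
       [[a [b [c [d [e [f [U U' A [h1 h2 h3 h4]]]]]]]]|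
       [[a [b [c [d [U A [h1 h2 h3]]]]]]|
       [[a [b [c [d [U A [h1 h2 h3]]]]]]|
       [[a [b [c [d [U A [h1 h2 h3]]]]]]|
        [a [b [c [d [U A [h1 h2 h3]]]]]]]]]]]];
  rewrite /= !inE !negb_or in U; try (rewrite /= !inE !negb_or in U'); rewrite /= in A; split_hyps.
- apply: (@sc_intro _ D a b c d e f); try fin hs; apply: fr_intro; fin hs.
- apply: (@sc_intro _ D a b c d e f); try fin hs; apply: fr_intro; fin hs.
- apply: (@sc_intro _ D a b c d e f); try fin hs; apply: fr_intro; fin hs.
- apply: (@sc_intro _ D b a c c a d); try fin hs; apply: fr_intro; fin hs.
- apply: (@sc_intro _ D a b c b c d); try fin hs; apply: fr_intro; fin hs.
- apply: (@sc_intro _ D a b c d b c); try fin hs; apply: fr_intro; fin hs.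
- apply: (@sc_intro _ D a b c d c b); try fin hs; apply: fr_intro; fin hs.
Qed.

Ltac memb := rewrite !inE; solve [by rewrite eqxx | by apply/orP; right | done].

Lemma caseAB G u v D1 : gsym G -> adj G u v -> semitotal_dom (contract G u v) D1 ->
  has_friendly_triple (contract G u v) D1 ->
  exists D, [/\ semitotal_dom G D, #|D| = #|D1|.+1 & Scond G D].
Proof.
move=> hs huv hstd [x [y [z [hx hy hz F]]]].
have vD := vnotin hstd.
case/adjP: (huv) => huV hvV nuv.
have [uD|uD] := boolP (u \in D1).
- exists (v |: D1); split; first exact: (liftA hs huv hstd uD).
  + by rewrite cardsU1 vD.
  + have [s hsD [nsu H]] := partnerA hs huv hstd uD.
    have nv : forall w, w \in D1 -> w != v by move=> w hw; apply/eqP => e; rewrite -e hw in vD.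
    apply: (@scC G (v |: D1) v u s x y z hs _ _ _ _ _ _ _ (nv _ hsD) nsu H (nv _ hx) (nv _ hy) (nv _ hz) F);
      try memb.
    by rewrite hs.
- have nu : forall w, w \in D1 -> w != u by move=> w hw; apply/eqP => e; rewrite -e hw in uD.
  case/fr_elim: F => xy xz yz hxy hyz.
  have hxy' : adj G x y.
  { case/adjC_dec: hxy => _ _ _ _ [h|[e _]|[e _]] //.
    - by move: (nu _ hx); rewrite e eqxx.
    - by move: (nu _ hy); rewrite e eqxx. }
  case/(dl2C_dec hs): hyz => [h|[e _]|[e _]|[h1 h2]].
  + have [a [y0 [ha hy0 hya]]] := domU hs huv hstd uD.
    have aD : a \notin D1 by case: ha => ->.
    have na : forall w, w \in D1 -> a != w by move=> w hw; apply/eqP => e; rewrite e hw in aD.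
    exists (a |: D1); split; first exact: (liftB hs huv hstd uD ha hy0 hya).
    * by rewrite cardsU1 aD.
    * have [s hsD [nsy H]] := partnerB hs huv hstd uD ha hy0.
      have ax := na _ hx; have ay := na _ hy; have az := na _ hz; have as' := na _ hsD.
      apply: (@scT G (a |: D1) x y z a y0 s hs); try memb; try fin hs.
      apply: fr_intro; fin hs.
  + by move: (nu _ hy); rewrite e eqxx.
  + by move: (nu _ hz); rewrite e eqxx.
  + have [a [ha hya]] : exists a, (a = u \/ a = v) /\ adj G y a.
      by case: h1 => h1; [exists v; split; [right|] | exists u; split; [left|]].
    have aD : a \notin D1 by case: ha => ->.
    have na : forall w, w \in D1 -> a != w by move=> w hw; apply/eqP => e; rewrite e hw in aD.
    have ax := na _ hx; have ay := na _ hy; have az := na _ hz.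
    exists (a |: D1); split; first exact: (liftB hs huv hstd uD ha hy hya).
    * by rewrite cardsU1 aD.
    * have haz : dist_le2 G a z by apply: (dl2_sym hs); exact: nearA h2.
      apply: (@S_end _ (a |: D1) x y a z hs); try memb; fin hs.
Qed.

Lemma bigmin_le (I : eqType) (r : seq I) (P : pred I) (F : I -> nat) idx j :
  j \in r -> P j -> \big[minn/idx]_(i <- r | P i) F i <= F j.
Proof.
elim: r => //= a r IH; rewrite inE big_cons => /orP[/eqP<-|hj] hP.
- by rewrite hP geq_minl.
- case: (P a); last exact: IH. by rewrite geq_min IH ?orbT.
Qed.

Lemma gamma_le G D : semitotal_dom G D -> gamma_t2 G <= #|D|.
Proof. move=> h; rewrite /gamma_t2; apply: bigmin_le => //; exact: mem_index_enum. Qed.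

Lemma gamma_att G D0 : semitotal_dom G D0 ->
  exists2 D, semitotal_dom G D & #|D| = gamma_t2 G.
Proof.
move=> h0.
case: (arg_minnP (fun D : {set T} => #|D|) h0) => D hD hmin.
exists D => //; apply/eqP; rewrite eqn_leq gamma_le // andbT.
rewrite /gamma_t2; apply: (big_ind (fun m => #|D| <= m)).
- exact: max_card.
- by move=> m n h1 h2; rewrite leq_min h1.
- move=> D' hD'; exact: hmin.
Qed.

Lemma contracts0_inv G G' : contracts 0 G G' -> G' = G.
Proof. by move=> h; inversion h. Qed.

Lemma contractsS_inv k G G' : contracts k.+1 G G' ->
  exists u v, adj G u v /\ contracts k (contract G u v) G'.
Proof. move=> h; inversion h; subst; by exists u, v. Qed.

Lemma not_red0 G : ~ reducible_by G 0.
Proof.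
case=> G' [/contracts0_inv -> [D [hD hlt]]].
by have := gamma_le hD; rewrite leqNgt hlt.
Qed.

Lemma red1_of_fr G D : gsym G -> min_semitotal_dom G D -> has_friendly_triple G D ->
  reducible_by G 1.
Proof.
move=> hs [hstd hcard] [x [y [z [hx hy hz F]]]].
exists (contract G y x); split.
- apply: contractsS; last exact: contracts0.
  case/fr_elim: F => _ _ _ h _; by rewrite hs.
- exists (D :\ x); split; first exact: (contract_fr hs hstd hx hy hz F).
  have := cardsD1 x D; rewrite hx /= hcard => ->. by rewrite add1n.
Qed.

End Proofs.


Theorem theorem5 (T : finType) (e : rel T)
  (e_sym : symmetric e) (e_irr : irreflexive e)
  (e_conn : forall x y : T, connect e x y) (two_le : 2 <= #|T|) :
  let G := Graph [set: T] e in
  (ct_is G 1 <-> exists D, min_semitotal_dom G D /\ has_friendly_triple G D) /\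
  (ct_is G 2 <->
     (forall D, min_semitotal_dom G D -> ~ has_friendly_triple G D) /\
     exists D, [/\ semitotal_dom G D, #|D| = (gamma_t2 G).+1 &
                   has_ST_configuration G D]).
Proof.
move=> G.
have hs : gsym G by move=> x y; rewrite /adj /= !inE eq_sym e_sym.
have nb : forall x, exists z, adj G x z.
{ move=> x.
  have [y hy] : exists y, y != x.
  { have /card_gt1P [a [b [_ _ nab]]] := two_le.
    have [ax|ax] := eqVneq a x; last by exists a.
    by exists b; rewrite -ax eq_sym. }
  have /connectP [p hp hl] := e_conn x y.
  case: p hp hl => [_ /= hl|z p /= /andP [hxz _] _]; first by rewrite hl eqxx in hy.
  exists z; rewrite /adj /= !inE hxz andbT.
  apply/eqP => exz; by rewrite -exz e_irr in hxz. }
have hex : semitotal_dom G [set: T].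
{ apply: stdI.
  - exact: subxx.
  - by move=> x _; rewrite inE.
  - move=> x _; have [z hz] := nb x; exists z; first by rewrite inE.
    split; last exact: adj_dl2.
    case/adjP: hz => _ _ h; by rewrite eq_sym. }
have part1f : ct_is G 1 -> exists D, min_semitotal_dom G D /\ has_friendly_triple G D.
{ case=> [[G' [hc [D' [hD' hlt]]]] _].
  have [u [v [huv hc0]]] := contractsS_inv hc.
  rewrite (contracts0_inv hc0) in hD'.
  have [D [hD hcard hfr]] := lift hs huv hD'.
  exists D; split => //; split => //.
  apply/eqP; rewrite eqn_leq gamma_le // andbT; by rewrite hcard. }
split.
{ split; first exact: part1f.
  case=> D [hmin hfr]; split; first exact: (red1_of_fr hs hmin hfr).
  move=> j; rewrite ltnS leqn0 => /eqP ->; exact: not_red0. }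
split.
- case=> hred2 hnot.
  have hn1 : ~ reducible_by G 1 by apply: hnot.
  split.
  + move=> D hmin hfr; apply: hn1; exact: (red1_of_fr hs hmin hfr).
  + case: hred2 => [G2 [hc [D2 [hD2 hlt]]]].
    have [u [v [huv hc1]]] := contractsS_inv hc.
    have [u2 [v2 [huv2 hc0]]] := contractsS_inv hc1.
    rewrite (contracts0_inv hc0) in hD2.
    have hs1 := contract_sym u v hs.
    have [D1 [hD1 hc1' hfr1]] := lift hs1 huv2 hD2.
    have hge : gamma_t2 G <= #|D1|.
    { rewrite leqNgt; apply/negP => hlt1; apply: hn1; exists (contract G u v); split.
      - apply: contractsS huv _; exact: contracts0.
      - by exists D1. }
    have [D [hD hcD hsc]] := caseAB hs huv hD1 hfr1.
    exists D; split => //; last exact: scS.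
    rewrite hcD; congr S; apply/eqP; rewrite eqn_leq hge andbT hc1'; exact: hlt.
- case=> hnofr [D [hD hcard hcfg]].
  have [x [y [z [p [q [r [H F1 F2 /and3P [xp xq xr]]]]]]]] := scR hs hcfg.
  case/andP: H => hx /and5P [hy hz hp hq hr].
  split.
  + have hyx : adj G y x by case/fr_elim: F1 => _ _ _ h _; rewrite hs.
    have hD1 := contract_fr hs hD hx hy hz F1.
    have hs1 := contract_sym y x hs.
    case/fr_elim: F2 => pq pr qr hpq hqr.
    have px : p != x by rewrite eq_sym.
    have qx : q != x by rewrite eq_sym.
    have rx : r != x by rewrite eq_sym.
    have F2' : friendly_triple (contract G y x) p q r.
    { apply: fr_intro => //; [exact: adjC_mono | exact: dl2C_mono]. }
    have hp1 : p \in D :\ x by rewrite !inE px hp.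
    have hq1 : q \in D :\ x by rewrite !inE qx hq.
    have hr1 : r \in D :\ x by rewrite !inE rx hr.
    have hD2 := contract_fr hs1 hD1 hp1 hq1 hr1 F2'.
    exists (contract (contract G y x) q p); split.
    * apply: contractsS hyx _; apply: contractsS; last exact: contracts0.
      by rewrite hs1; apply: adjC_mono.
    * exists (D :\ x :\ p); split => //.
      have h1 := cardsD1 x D; have h2 := cardsD1 p (D :\ x).
      rewrite hx /= in h1; rewrite hp1 /= in h2.
      have e3 : gamma_t2 G = #|D :\ x :\ p|.+1.
      { apply/eqP; rewrite -eqSS -hcard h1 h2 !add1n. done. }
      by rewrite e3 ltnSn.
  + move=> j; case: j => [_|[_|//]]; first exact: not_red0.
    move=> h1; have [D0 [hmin hfr]] : exists D, min_semitotal_dom G D /\ has_friendly_triple G D.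
    { apply: part1f; split => //; move=> j; rewrite ltnS leqn0 => /eqP ->; exact: not_red0. }
    exact: (hnofr D0 hmin hfr).
Qed.
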